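(* Let $\mathcal{H}$ be a $d$-dimensional Hilbert space with fixed orthonormal basis $\{|i\rangle\}_{i=0}^{d-1}$. The logarithmic coherence number $\mathcal{L}_C$ on density operators on $\mathcal{H}$ satisfies: (C1) $\mathcal{L}_C(\rho)\ge 0$ for all states $\rho$, and $\mathcal{L}_C(\rho)=0$ if and only if $\rho$ is incoherent; (C2) $\mathcal{L}_C(\Lambda(\rho))\le\mathcal{L}_C(\rho)$ for every incoherent operation $\Lambda$ and every state $\rho$; (C3) for every incoherent operation with incoherent Kraus operators $\{K_n\}$ and every state $\rho$, $\sum_n q_n\mathcal{L}_C(\rho_n)\le\mathcal{L}_C(\rho)$, where $q_n=\mathrm{Tr}(K_n\rho K_n^\dagger)$ and $\rho_n=K_n\rho K_n^\dagger/q_n$ (sum over $n$ with $q_n>0$); (C4) $\mathcal{L}_C\big(\sum_i p_i\rho_i\big)\le\sum_i p_i\mathcal{L}_C(\rho_i)$ for every ensemble $\{p_i,\rho_i\}$ of states. In particular, $\mathcal{L}_C$ is a coherence measure.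
   Context: A state is incoherent if it is diagonal in the fixed basis $\{|i\rangle\}$; $\mathcal{I}$ denotes the set of incoherent states. An incoherent operation is a completely positive trace-preserving map $\Lambda(\rho)=\sum_n K_n\rho K_n^\dagger$ with $\sum_n K_n^\dagger K_n=I$ and each Kraus operator satisfying $K_n\mathcal{I}K_n^\dagger\subseteq\mathcal{I}$ (up to normalization, i.e. $K_n\delta K_n^\dagger$ is diagonal for every diagonal $\delta$). The coherence rank $R_C(|\psi\rangle)$ of a pure state $|\psi\rangle=\sum_j\lambda_j|j\rangle$ is the number of nonzero coefficients $\lambda_j$. The logarithmic coherence rank is $\mathcal{L}_C(|\psi\rangle)=\log_2 R_C(|\psi\rangle)$, and the logarithmic coherence number of a state $\rho$ is $\mathcal{L}_C(\rho)=\min\sum_i p_i\mathcal{L}_C(|\psi_i\rangle)$, the minimum over all pure-state decompositions $\rho=\sum_i p_i|\psi_i\rangle\langle\psi_i|$. *)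

(* Defs.v *)
From HB Require Import structures.
From mathcomp Require Import all_boot all_order all_algebra.
From mathcomp Require Import boolp classical_sets reals exp.
From mathcomp Require Import complex.
Set Implicit Arguments. Unset Strict Implicit. Unset Printing Implicit Defensive.
Import Order.TTheory GRing.Theory Num.Theory.
Local Open Scope ring_scope.
Local Open Scope complex_scope.

Section Coherence.
Variables (R : realType) (d : nat).
Local Notation C := R[i].

Definition adjmx m n (A : 'M[C]_(m, n)) : 'M[C]_(n, m) := (map_mx conjc A)^T.

Definition is_state (rho : 'M[C]_d) : Prop :=
  (forall v : 'cV[C]_d, 0 <= (adjmx v *m rho *m v) 0 0) /\ \tr rho = 1.

Definition incoherent (rho : 'M[C]_d) : Prop := is_diag_mx rho.

Definition unit_vec (psi : 'cV[C]_d) : Prop := (adjmx psi *m psi) 0 0 = 1.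

Definition coh_rank (psi : 'cV[C]_d) : nat := #|[set j : 'I_d | psi j 0 != 0]|.
Definition log2 (x : R) : R := ln x / ln 2.
Definition log_coh_rank (psi : 'cV[C]_d) : R := log2 (coh_rank psi)%:R.

Definition pure_decomp (rho : 'M[C]_d) m (p : 'I_m -> R) (psi : 'I_m -> 'cV[C]_d) :
  Prop :=
  [/\ forall i, 0 <= p i, \sum_(i < m) p i = 1, forall i, unit_vec (psi i) &
      rho = \sum_(i < m) (p i)%:C *: (psi i *m adjmx (psi i))].

(* logarithmic coherence number: min (= inf, the minimum is attained) over
   all pure-state decompositions *)
Local Open Scope classical_set_scope.
Definition log_coh_number (rho : 'M[C]_d) : R :=
  inf [set x : R | exists m (p : 'I_m -> R) (psi : 'I_m -> 'cV[C]_d),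
         pure_decomp rho p psi /\ x = \sum_(i < m) p i * log_coh_rank (psi i)].

Definition incoherent_kraus (K : 'M[C]_d) : Prop :=
  forall delta : 'M[C]_d, is_diag_mx delta -> is_diag_mx (K *m delta *m adjmx K).

Definition incoherent_op N (K : 'I_N -> 'M[C]_d) : Prop :=
  \sum_(n < N) adjmx (K n) *m K n = 1%:M /\ forall n, incoherent_kraus (K n).

Definition apply_kraus N (K : 'I_N -> 'M[C]_d) (rho : 'M[C]_d) : 'M[C]_d :=
  \sum_(n < N) K n *m rho *m adjmx (K n).

(* outcome probability q_n = Tr(K_n rho K_n^dagger) (a nonnegative real for a
   state rho; we take its real part to view it in R) *)
Definition kraus_prob (K : 'M[C]_d) (rho : 'M[C]_d) : R :=
  complex.Re (\tr (K *m rho *m adjmx K)).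

End Coherence.

(* Main.v *)
Require Import Defs.
From HB Require Import structures.
From mathcomp Require Import all_boot all_order all_algebra.
From mathcomp Require Import boolp classical_sets reals exp.
From mathcomp Require Import complex.
From mathcomp Require Import ring.
Set Implicit Arguments. Unset Strict Implicit. Unset Printing Implicit Defensive.
Import Order.TTheory GRing.Theory Num.Theory.
Local Open Scope ring_scope.
Local Open Scope complex_scope.

Section Basics.
Variables (R : realType) (d : nat).
Local Notation C := R[i].
Local Notation cV := 'cV[C]_d.
Implicit Types (w v : cV) (c : C) (K : 'M[C]_d).

Lemma adjmx_mul m n p (A : 'M[C]_(m, n)) (B : 'M[C]_(n, p)) :
  adjmx (A *m B) = adjmx B *m adjmx A.
Proof. by rewrite /adjmx map_mxM trmx_mul. Qed.

Lemma adjmxK m n (A : 'M[C]_(m, n)) : adjmx (adjmx A) = A.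
Proof. by apply/matrixP => i j; rewrite !mxE conjcK. Qed.

Lemma adjmxD m n (A B : 'M[C]_(m, n)) : adjmx (A + B) = adjmx A + adjmx B.
Proof. by apply/matrixP => i j; rewrite !mxE rmorphD. Qed.

Lemma adjmxZ m n c (A : 'M[C]_(m, n)) : adjmx (c *: A) = conjc c *: adjmx A.
Proof. by apply/matrixP => i j; rewrite !mxE rmorphM. Qed.

Lemma adjmx0 m n : adjmx (0 : 'M[C]_(m, n)) = 0.
Proof. by apply/matrixP => i j; rewrite !mxE conjc0. Qed.

Lemma adjmx_sum m n (I : finType) (F : I -> 'M[C]_(m, n)) :
  adjmx (\sum_i F i) = \sum_i adjmx (F i).
Proof. exact: (big_morph _ (@adjmxD m n) (@adjmx0 m n)). Qed.

Lemma realC_ge0 (z : C) : 0 <= z -> z = (complex.Re z)%:C.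
Proof. by move=> z0; rewrite [LHS]complexE (ger0_Im z0) mulr0 addr0. Qed.

Definition nrm (w : cV) : C := (adjmx w *m w) 0 0.
Definition nr (w : cV) : R := complex.Re (nrm w).

Lemma nrmE (w : cV) : nrm w = \sum_j `|w j 0| ^+ 2.
Proof.
rewrite /nrm mxE; apply: eq_bigr => j _; rewrite !mxE sqr_normc mulrC.
done.
Qed.

Lemma nrm_ge0 w : 0 <= nrm w.
Proof. by rewrite nrmE sumr_ge0 // => j _; rewrite exprn_ge0. Qed.

Lemma nrmR w : nrm w = (nr w)%:C.
Proof. exact/realC_ge0/nrm_ge0. Qed.

Lemma nr_ge0 w : 0 <= nr w.
Proof. by rewrite -lecR -nrmR nrm_ge0. Qed.

Lemma nrm_eq0 w : nrm w = 0 -> w = 0.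
Proof.
rewrite nrmE => /psumr_eq0P H; apply/matrixP => j k; rewrite ord1 mxE.
have /eqP := H (fun i _ => exprn_ge0 _ (normr_ge0 _)) j isT.
by rewrite expf_eq0 /= normr_eq0 => /eqP.
Qed.

Lemma nr_eq0 w : nr w = 0 -> w = 0.
Proof. by move=> h; apply: nrm_eq0; rewrite nrmR h. Qed.

Lemma nrm_entry w j : `|w j 0| ^+ 2 <= nrm w.
Proof.
rewrite nrmE (bigD1 j) //= lerDl sumr_ge0 // => k _; exact: exprn_ge0.
Qed.

Lemma nrmZ c w : nrm (c *: w) = conjc c * c * nrm w.
Proof. by rewrite /nrm adjmxZ -scalemxAl -scalemxAr !mxE mulrA. Qed.

Lemma nrZ (s : R) w : nr (s%:C *: w) = s ^+ 2 * nr w.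
Proof.
have cs : (s%:C)^* = s%:C :> C.
  by apply/eqP; rewrite eq_complex /= oppr0 !eqxx.
apply: complexI; rewrite -!nrmR nrmZ cs nrmR -!rmorphM.
by rewrite expr2.
Qed.

Lemma tr_outer (w : cV) : \tr (w *m adjmx w) = nrm w.
Proof. by rewrite mxtrace_mulC /nrm /mxtrace big_ord1. Qed.


Lemma nr0 : nr (0 : cV) = 0.
Proof. by rewrite /nr /nrm adjmx0 mul0mx mxE. Qed.

Lemma ln2_gt0 : 0 < ln (2 : R).
Proof. by apply: ln_gt0; rewrite ltr1n. Qed.

Lemma log2_ge0 (n : nat) : (1 <= n)%N -> 0 <= log2 (n%:R : R).
Proof.
move=> n1; rewrite /log2 divr_ge0 ?ln_ge0 ?ler1n //; exact/ltW/ln2_gt0.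
Qed.

Lemma log2_le0 (n : nat) : (n <= 1)%N -> log2 (n%:R : R) <= 0.
Proof.
move=> n1; rewrite /log2 mulr_le0_ge0 ?ln_le0 ?ler1n ?invr_ge0 //.
  by rewrite lern1.
exact/ltW/ln2_gt0.
Qed.

Lemma log2_ge1 (n : nat) : (2 <= n)%N -> 1 <= log2 (n%:R : R).
Proof.
move=> n2; rewrite /log2 ler_pdivlMr ?ln2_gt0 // mul1r ler_ln ?ler_nat //.
  by rewrite posrE.
by rewrite posrE ltr0n; apply: leq_trans n2.
Qed.

Lemma log2_mono (a b : nat) : (1 <= a)%N -> (a <= b)%N ->
  log2 (a%:R : R) <= log2 (b%:R : R).
Proof.
move=> a1 ab; rewrite /log2 ler_wpM2r ?invr_ge0 ?(ltW ln2_gt0) //.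
rewrite ler_ln ?posrE ?ltr0n ?ler_nat //; exact: leq_trans ab.
Qed.

Lemma coh_rank_gt0 w : w != 0 -> (0 < coh_rank w)%N.
Proof.
move=> wn0; rewrite /coh_rank card_gt0; apply/set0Pn.
have [j wj] : exists j, w j 0 != 0.
  apply/existsP; apply: contraR wn0 => /existsPn H.
  apply/eqP/matrixP => j k; rewrite ord1 mxE; exact/eqP/negPn/H.
by exists j; rewrite inE.
Qed.

Lemma coh_rank_le_sub w v : (forall j, w j 0 != 0 -> v j 0 != 0) ->
  (coh_rank w <= coh_rank v)%N.
Proof.
move=> H; apply: subset_leq_card; apply/fintype.subsetP => j; rewrite !inE; exact: H.
Qed.

Lemma coh_rankZ_le c w : (coh_rank (c *: w) <= coh_rank w)%N.
Proof.
apply: coh_rank_le_sub => j; rewrite mxE mulf_eq0 negb_or; by case/andP.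
Qed.

Lemma nr_lcr_le w v : (w != 0 -> (coh_rank w <= coh_rank v)%N) ->
  nr w * log_coh_rank w <= nr w * log_coh_rank v.
Proof.
have [->|wn0] := eqVneq w 0; first by rewrite nr0 !mul0r.
move=> /(_ isT) H; rewrite ler_wpM2l ?nr_ge0 //.
apply: log2_mono => //; exact: coh_rank_gt0.
Qed.

Lemma kraus_col K : incoherent_kraus K ->
  forall j r1 r2 : 'I_d, r1 != r2 -> K r1 j * conjc (K r2 j) = 0.
Proof.
move=> HK j r1 r2 r12.
have D : is_diag_mx (delta_mx j j : 'M[C]_d).
  apply/is_diag_mxP => a b ab; rewrite mxE.
  case: (eqVneq a j) => [aj|] //=; case: (eqVneq b j) => [bj|] //=.
  by move: ab; rewrite aj bj eqxx.
have /is_diag_mxP/(_ r1 r2 r12) <- := HK _ D.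
rewrite mxE (bigD1 j) //= big1 => [|k kj].
  rewrite mxE (bigD1 j) //= big1 => [|l lj]; last by rewrite mxE (negbTE lj) mulr0.
  by rewrite !mxE !eqxx /= mulr1 !addr0.
rewrite !mxE big1 ?mul0r // => l _; by rewrite mxE (negbTE kj) andbF mulr0.
Qed.

Lemma coh_rank_kraus K w : incoherent_kraus K ->
  (coh_rank (K *m w) <= coh_rank w)%N.
Proof.
move=> /kraus_col HK.
pose f (r : 'I_d) := odflt r [pick j | (K r j != 0) && (w j 0 != 0)].
rewrite /coh_rank.
set A := [set j | (K *m w) j 0 != 0].
set B := [set j | w j 0 != 0].
have fA : forall r, r \in A -> (K r (f r) != 0) && (w (f r) 0 != 0).
  move=> r; rewrite inE /f; case: pickP => [j -> //|H].
  rewrite mxE big1 ?eqxx // => j _.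
  move: (H j); have [->|_] := eqVneq (K r j) 0; first by rewrite mul0r.
  by have [->|] := eqVneq (w j 0) 0; rewrite ?mulr0.
have finj : {in A &, injective f}.
  move=> r1 r2 /fA /andP[h1 _] /fA /andP[h2 _] e.
  apply/eqP; apply: contraT => r12.
  rewrite -e in h2; have /eqP := HK (f r1) r1 r2 r12.
  by rewrite mulf_eq0 conjc_eq0 (negbTE h1) (negbTE h2).
rewrite -(card_in_imset finj); apply: subset_leq_card.
apply/fintype.subsetP => _ /imsetP[r rA ->]; rewrite inE.
by case/andP: (fA r rA).
Qed.


Lemma sum_enum (V : nmodType) (I : finType) (F : I -> V) :
  \sum_(i : I) F i = \sum_(k < #|I|) F (enum_val k).
Proof. by rewrite -big_enum_val; apply: eq_bigl => i. Qed.

Lemma coh_rankZ c w : c != 0 -> coh_rank (c *: w) = coh_rank w.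
Proof.
by move=> c0; apply: eq_card => j; rewrite !inE mxE mulf_eq0 negb_or c0.
Qed.

Local Open Scope classical_set_scope.
Definition Sset (rho : 'M[C]_d) := [set x : R | exists m (p : 'I_m -> R) (psi : 'I_m -> cV),
         pure_decomp rho p psi /\ x = \sum_(i < m) p i * log_coh_rank (psi i)].

Lemma LCN (rho : 'M[C]_d) : log_coh_number rho = inf (Sset rho).
Proof. by []. Qed.

Lemma unit_rank (psi : cV) : unit_vec psi -> (1 <= coh_rank psi)%N.
Proof.
move=> u; apply: coh_rank_gt0; apply/eqP => p0.
by move: u; rewrite /unit_vec p0 adjmx0 mul0mx mxE => /eqP; rewrite eq_sym oner_eq0.
Qed.

Lemma Sset_ge0 (rho : 'M[C]_d) x : Sset rho x -> 0 <= x.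
Proof.
case=> m [p] [psi] [[p0 _ u _] ->]; rewrite sumr_ge0 // => i _.
by rewrite mulr_ge0 // log2_ge0 // unit_rank.
Qed.

Lemma Sset_lb (rho : 'M[C]_d) : lbound (Sset rho) 0.
Proof. by move=> x /Sset_ge0. Qed.

Lemma Sset_has_lb (rho : 'M[C]_d) : has_lbound (Sset rho).
Proof. by exists 0; apply: Sset_lb. Qed.

Lemma LCN_le (rho : 'M[C]_d) x : Sset rho x -> log_coh_number rho <= x.
Proof. by move=> Sx; rewrite LCN; apply: ge_inf => //; apply: Sset_has_lb. Qed.

Lemma LCN_ge (rho : 'M[C]_d) y : Sset rho !=set0 -> (forall x, Sset rho x -> y <= x) ->
  y <= log_coh_number rho.
Proof. by move=> ne H; rewrite LCN; apply: lb_le_inf. Qed.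

Lemma tr_pos (rho : 'M[C]_d) : \tr rho = 1 -> (0 < d)%N.
Proof.
move=> Htr; case: (posnP d) => [d0|//]; exfalso; move: Htr.
rewrite /mxtrace big1; first by move/eqP; rewrite eq_sym oner_eq0.
by move=> i _; have := ltn_ord i; rewrite {2}d0.
Qed.

Lemma key_mem (I : finType) (w : I -> cV) rho :
  rho = \sum_i w i *m adjmx (w i) -> \tr rho = 1 ->
  Sset rho (\sum_i nr (w i) * log_coh_rank (w i)).
Proof.
move=> Hrho Htr; have d0 := tr_pos Htr.
pose e0 : cV := delta_mx (Ordinal d0) 0.
have ne0 : nrm e0 = 1.
  rewrite nrmE (bigD1 (Ordinal d0)) //= big1 => [|j jn].
    by rewrite !mxE !eqxx normr1 expr1n addr0.
  by rewrite mxE (negbTE jn) normr0 expr0n.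
pose nz (v : cV) := if nr v == 0 then e0 else ((Num.sqrt (nr v))^-1)%:C *: v.
have sP v : nr v != 0 -> (Num.sqrt (nr v))^-1 ^+ 2 * nr v = 1.
  by move=> vn0; rewrite exprVn sqr_sqrtr ?nr_ge0 // mulVf.
have nz1 v : nrm (nz v) = 1.
  rewrite /nz; case: eqP => [//|/eqP vn0].
  by rewrite nrmR nrZ sP.
have nz2 v : (nr v)%:C *: (nz v *m adjmx (nz v)) = v *m adjmx v.
  rewrite /nz; case: eqP => [v0|/eqP vn0].
    by rewrite v0 scale0r (nr_eq0 v0) mul0mx.
  rewrite adjmxZ conjc_real -scalemxAl -scalemxAr !scalerA -!rmorphM.
  by rewrite -mulrA -expr2 mulrC sP // scale1r.
have nz3 v : nr v * log_coh_rank (nz v) = nr v * log_coh_rank v.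
  rewrite /nz; case: eqP => [->|/eqP vn0]; first by rewrite !mul0r.
  rewrite /log_coh_rank coh_rankZ // -(rmorph0 (real_complex R)).
  apply/eqP => /complexI /eqP; rewrite invr_eq0 sqrtr_eq0 => h.
  by move: vn0; rewrite eq_le h nr_ge0.
exists #|I|, (fun k => nr (w (enum_val k))), (fun k => nz (w (enum_val k))).
split; last by rewrite sum_enum; apply: eq_bigr => k _; rewrite nz3.
split => //.
- by move=> k; apply: nr_ge0.
- apply: complexI; rewrite rmorph1 -Htr Hrho !raddf_sum [RHS]sum_enum.
  by apply: eq_bigr => k _ /=; rewrite tr_outer -nrmR.
- by move=> k; apply: nz1.
by rewrite Hrho sum_enum; apply: eq_bigr => k _; rewrite nz2.
Qed.

End Basics.
Section Chol.
Variables (R : realType) (d : nat).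
Local Notation C := R[i].
Local Notation cV := 'cV[C]_d.
Implicit Types (w v x : cV) (c : C) (A K : 'M[C]_d).

Definition psd A := forall v : cV, 0 <= (adjmx v *m A *m v) 0 0.
Local Notation ek k := (delta_mx k 0 : cV).
Definition bf A x (y : cV) := (adjmx x *m A *m y) 0 0.

Lemma adjmx_delta (k : 'I_d) : adjmx (ek k) = delta_mx 0 k.
Proof. by apply/matrixP => a b; rewrite !mxE conjc_nat andbC. Qed.

Lemma bf_delta A a b : bf A (ek a) (ek b) = A a b.
Proof. by rewrite /bf adjmx_delta -rowE -colE !mxE. Qed.

Lemma bfDl A x y z : bf A (x + y) z = bf A x z + bf A y z.
Proof. by rewrite /bf adjmxD !mulmxDl mxE. Qed.
Lemma bfDr A x y z : bf A z (x + y) = bf A z x + bf A z y.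
Proof. by rewrite /bf !mulmxDr mxE. Qed.
Lemma bfZl A c x y : bf A (c *: x) y = conjc c * bf A x y.
Proof. by rewrite /bf adjmxZ -!scalemxAl mxE. Qed.
Lemma bfZr A c x y : bf A x (c *: y) = c * bf A x y.
Proof. by rewrite /bf -!scalemxAr mxE. Qed.

Lemma bf2 A (al be : C) a b :
  bf A (al *: ek a + be *: ek b) (al *: ek a + be *: ek b) =
  conjc al * al * A a a + conjc al * be * A a b + conjc be * al * A b a
  + conjc be * be * A b b.
Proof.
rewrite !bfDl !bfDr !bfZl !bfZr !bf_delta.
ring.
Qed.

Lemma psd_bf A x : psd A -> 0 <= bf A x x.
Proof. by move=> H; apply: H. Qed.

Lemma psd_diag A a : psd A -> 0 <= A a a.
Proof. by move=> H; rewrite -bf_delta psd_bf. Qed.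

Lemma herm_aux (p1 p2 z1 z2 : C) : 0 <= p1 -> 0 <= p2 ->
  0 <= p1 + z1 + z2 + p2 ->
  0 <= conjc 1 * 1 * p1 + conjc 1 * (Complex 0 1) * z1
       + conjc (Complex 0 1) * 1 * z2 + conjc (Complex 0 1) * (Complex 0 1) * p2 ->
  z2 = conjc z1.
Proof.
move=> /ger0_Im i1 /ger0_Im i2 /ger0_Im i3 /ger0_Im i4.
move: i1 i2 i3 i4; case: p1 p2 z1 z2 => [a1 b1] [a2 b2] [x1 y1] [x2 y2].
simpc => /= -> -> h1 h2.
move: h1 h2; rewrite !add0r !addr0 => h1 h2.
apply/eqP; rewrite eq_complex /=; apply/andP; split.
  by rewrite eq_sym -subr_eq0 h2.
by rewrite -addr_eq0 addrC h1.
Qed.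

Lemma psd_herm A a b : psd A -> A b a = conjc (A a b).
Proof.
move=> H; apply: herm_aux (psd_diag a H) (psd_diag b H) _ _.
  by have := psd_bf (1 *: ek a + 1 *: ek b) H; rewrite bf2 rmorph1 !mul1r.
by have := psd_bf (1 *: ek a + (Complex 0 1) *: ek b) H; rewrite bf2.
Qed.

Lemma psd_adj A : psd A -> adjmx A = A.
Proof.
move=> H; apply/matrixP => a b; rewrite !mxE (psd_herm b a H).
by case: (A a b) => x y /=; simpc.
Qed.

Lemma row0_aux (p z : C) : 0 <= p ->
  (forall al : C, 0 <= conjc al * al * 0 + conjc al * 1 * z + conjc 1 * al * conjc z
     + conjc 1 * 1 * p) -> z = 0.
Proof.
move=> p0 H; apply/eqP/negPn/negP => zn0.
move: p0 zn0 H; case: p z => [p1 p2] [x y] p0 zn0 H.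
have n0 : x ^+ 2 + y ^+ 2 != 0.
  apply: contra zn0; rewrite paddr_eq0 ?sqr_ge0 // !sqrf_eq0 => /andP[/eqP -> /eqP ->].
  by [].
pose k := (p1 + 1) / (2 * (x ^+ 2 + y ^+ 2)).
have := H (Complex (- (k * x)) (- (k * y))).
simpc => /andP[_].
have -> : - (k * x * x) - k * y * y + (- (k * x * x) - k * y * y) + p1 = -1.
  by rewrite /k; field.
by rewrite ler0N1.
Qed.

Lemma psd_row0 A a b : psd A -> A a a = 0 -> A a b = 0.
Proof.
move=> H h0; apply: (row0_aux (psd_diag b H)) => al.
by have := psd_bf (al *: ek a + 1 *: ek b) H; rewrite bf2 h0 (psd_herm a b H).
Qed.

Lemma XE A j k l : (A *m delta_mx j j *m A) k l = A k j * A j l.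
Proof.
rewrite mxE (bigD1 j) //= big1 => [|m mj].
  rewrite mxE (bigD1 j) //= big1 => [|m mj]; last by rewrite mxE (negbTE mj) mulr0.
  by rewrite !mxE !eqxx /= mulr1 !addr0.
rewrite !mxE big1 ?mul0r // => m' _; by rewrite mxE (negbTE mj) andbF mulr0.
Qed.

Lemma EAE A j : delta_mx j j *m A *m delta_mx j j = A j j *: (delta_mx j j : 'M[C]_d).
Proof.
have D : delta_mx j j = ek j *m delta_mx 0 j :> 'M[C]_d by rewrite mul_delta_mx.
rewrite D !mulmxA -(mulmxA (ek j)) -(mulmxA (ek j)).
rewrite [delta_mx 0 j *m A *m ek j]mx11_scalar -adjmx_delta.
rewrite -/(bf A (ek j) (ek j)) bf_delta mul_mx_scalar -scalemxAl.
by rewrite adjmx_delta.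
Qed.

Lemma subZE (A M : 'M[C]_d) c k l : (A - c *: M) k l = A k l - c * M k l.
Proof. by rewrite !mxE. Qed.

Lemma adjmxB (A B : 'M[C]_d) : adjmx (A - B) = adjmx A - adjmx B.
Proof. by apply/matrixP => i j; rewrite !mxE rmorphB. Qed.

Lemma adjmx1 : adjmx (1%:M : 'M[C]_d) = 1%:M.
Proof. by apply/matrixP => i j; rewrite !mxE eq_sym conjc_nat. Qed.

Lemma adjmxE j : adjmx (delta_mx j j : 'M[C]_d) = delta_mx j j.
Proof. by apply/matrixP => a b; rewrite !mxE conjc_nat andbC. Qed.

Lemma chol_step A j : psd A -> A j j != 0 -> exists v : cV,
  [/\ psd (A - v *m adjmx v), (A - v *m adjmx v) j j = 0 &
      forall k, A k k = 0 -> (A - v *m adjmx v) k k = 0].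
Proof.
move=> H ajj.
have a0 : 0 <= A j j := psd_diag j H.
have aR : A j j = (complex.Re (A j j))%:C := realC_ge0 a0.
set r := complex.Re (A j j) in aR.
have r0 : 0 < r.
  rewrite lt_def -lecR -aR a0 andbT; apply: contra ajj => /eqP r0.
  by rewrite aR r0.
pose s := Num.sqrt r.
pose v : cV := (s^-1)%:C *: (A *m ek j).
pose E : 'M[C]_d := delta_mx j j.
pose c : C := (r^-1)%:C.
have ca : c * A j j = 1 by rewrite aR -rmorphM mulVf ?gt_eqF // rmorph1.
have vv : v *m adjmx v = c *: (A *m E *m A).
  rewrite /v adjmxZ conjc_real adjmx_mul (psd_adj H) adjmx_delta.
  rewrite -scalemxAl -scalemxAr scalerA -rmorphM.
  have -> : s^-1 * s^-1 = r^-1 by rewrite -invfM -expr2 sqr_sqrtr ?ltW.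
  by rewrite mulmxA -(mulmxA A (delta_mx j 0)) mul_delta_mx.
pose P : 'M[C]_d := 1%:M - c *: (E *m A).
have adjP : adjmx P = 1%:M - c *: (A *m E).
  by rewrite /P adjmxB adjmx1 adjmxZ conjc_real adjmx_mul adjmxE (psd_adj H).
have key : adjmx P *m A *m P = A - c *: (A *m E *m A).
  rewrite adjP /P !mulmxBl !mulmxBr !mul1mx !mulmx1 -!scalemxAl -!scalemxAr.
  have EAE' : A *m E *m A *m E = A *m (A j j *: E) by rewrite -EAE !mulmxA.
  rewrite !mulmxA EAE' -scalemxAr -scalemxAl !scalerA ca mulr1.
  by rewrite subrr subr0.
have Hp : psd (A - v *m adjmx v).
  move=> x; rewrite vv -key.
  by have := H (P *m x); rewrite adjmx_mul !mulmxA.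
exists v; split => //.
  by rewrite vv subZE XE mulrA ca mul1r subrr.
by move=> k hk; rewrite vv subZE XE (psd_row0 j H hk) mul0r mulr0 subr0.
Qed.

Lemma psd_zero A : psd A -> (forall k, A k k = 0) -> A = 0.
Proof.
by move=> H h0; apply/matrixP => a b; rewrite mxE (psd_row0 b H (h0 a)).
Qed.

Lemma chol A : psd A -> exists s : seq cV, A = \sum_(w <- s) w *m adjmx w.
Proof.
move=> H.
suff: forall n B, psd B -> (#|[set k | B k k != 0%R]| <= n)%N ->
    exists s : seq cV, B = \sum_(w <- s) w *m adjmx w.
  by move=> /(_ _ A H (leqnn _)).
elim=> [|n IH] B HB hn.
  exists [::]; rewrite big_nil; apply: psd_zero => // k.
  move: hn; rewrite leqn0 cards_eq0 => /eqP E.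
  apply/eqP/negPn/negP => bk.
  have kin : k \in [set k | B k k != 0%R] by rewrite inE.
  by move: kin; rewrite E inE.
case: (pickP (fun k => B k k != 0)) => [j bj|none]; last first.
  exists [::]; rewrite big_nil; apply: psd_zero => // k.
  by apply/eqP/negPn; rewrite none.
have [v [Hp hj hk]] := chol_step HB bj.
have lt : (#|[set k | (B - v *m adjmx v)%R k k != 0%R]| < #|[set k | B k k != 0%R]|)%N.
  apply: proper_card; apply/properP; split.
    apply/fintype.subsetP => k; rewrite !inE; apply: contra => /eqP /hk ->.
    by [].
  by exists j; rewrite !inE ?bj // hj eqxx.
have [s Hs] := IH _ Hp (leq_trans lt hn).
by exists (v :: s); rewrite big_cons -Hs addrC subrK.
Qed.

End Chol.
Section Main.
Variables (R : realType) (d : nat).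
Local Notation C := R[i].
Local Notation cV := 'cV[C]_d.
Implicit Types (w v psi : cV) (c : C) (A K rho : 'M[C]_d) (x y : R).

Lemma key_mem_seq (s : seq cV) rho :
  rho = \sum_(w <- s) w *m adjmx w -> \tr rho = 1 ->
  Sset rho (\sum_(w <- s) nr w * log_coh_rank w).
Proof.
move=> h1 h2; rewrite (big_nth 0) big_mkord in h1.
rewrite (big_nth 0) big_mkord.
exact: (key_mem (w := fun i : 'I_(size s) => nth 0 s i)).
Qed.

Lemma state_ne rho : is_state rho -> (Sset rho !=set0)%classic.
Proof.
case=> H tr1; have [s Hs] := chol H.
by exists (\sum_(w <- s) nr w * log_coh_rank w); apply: key_mem_seq.
Qed.

Lemma LCN_ge_state rho y : is_state rho ->
  (forall x, Sset rho x -> y <= x) -> y <= log_coh_number rho.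
Proof. by move=> /state_ne ne H; apply: LCN_ge. Qed.

Lemma scale_outer (t : R) w : 0 <= t ->
  t%:C *: (w *m adjmx w) = ((Num.sqrt t)%:C *: w) *m adjmx ((Num.sqrt t)%:C *: w).
Proof.
move=> t0; rewrite adjmxZ conjc_real -scalemxAl -scalemxAr scalerA -rmorphM.
by rewrite -expr2 sqr_sqrtr.
Qed.

Lemma nr_sqrt (t : R) w : 0 <= t -> nr ((Num.sqrt t)%:C *: w) = t * nr w.
Proof. by move=> t0; rewrite nrZ sqr_sqrtr. Qed.

Lemma LCN_ge0 rho : is_state rho -> 0 <= log_coh_number rho.
Proof. by move=> H; apply: LCN_ge_state => // x /Sset_ge0. Qed.

Lemma outerE w a b : (w *m adjmx w) a b = w a 0 * conjc (w b 0).
Proof. by rewrite mxE big_ord1 !mxE. Qed.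

Lemma ltr0c' (t : R) : (0 < t%:C) = (0 < t).
Proof. by simpc. Qed.

Lemma ler1c (t : R) : (1 <= t%:C) = (1 <= t).
Proof. by simpc. Qed.

Lemma decomp_sum rho m (p : 'I_m -> R) (psi : 'I_m -> cV) : pure_decomp rho p psi ->
  rho = \sum_(i < m) ((Num.sqrt (p i))%:C *: psi i) *m adjmx ((Num.sqrt (p i))%:C *: psi i).
Proof. by case=> p0 _ _ ->; apply: eq_bigr => i _; apply: scale_outer. Qed.

Lemma unit_nrm psi : unit_vec psi -> nrm psi = 1.
Proof. by []. Qed.

Lemma entry_le1 psi a : unit_vec psi -> `|psi a 0| <= 1.
Proof.
move=> u; rewrite -(expr_le1 (n:=2)) //; apply: le_trans (nrm_entry _ a) _.
by rewrite unit_nrm.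
Qed.

Lemma coherent_lb rho a b : a != b -> forall x, Sset rho x ->
  complex.Re `|rho a b| <= x.
Proof.
move=> ab x [m [p [psi [[p0 p1 u ->] ->]]]].
rewrite -lecR -realC_ge0 ?normr_ge0 // summxE rmorph_sum.
apply: le_trans (ler_norm_sum _ _ _) _; apply: ler_sum => i _.
rewrite mxE outerE normrM ger0_norm ?ler0c // rmorphM.
apply: ler_wpM2l; first by rewrite ler0c.
case: (eqVneq (psi i a 0) 0) => [->|na].
  by rewrite mul0r normr0 ler0c log2_ge0 // unit_rank.
case: (eqVneq (psi i b 0) 0) => [->|nb].
  by rewrite conjc0 mulr0 normr0 ler0c log2_ge0 // unit_rank.
have r2 : (2 <= coh_rank (psi i))%N.
  have <- : #|[set a; b]| = 2%N by rewrite cards2 ab.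
  apply: subset_leq_card; apply/fintype.subsetP => k; rewrite !inE.
  by case/orP => /eqP ->.
apply: le_trans (_ : 1 <= _); last by rewrite ler1c log2_ge1.
rewrite normrM normcJ mulr_ile1 ?normr_ge0 ?entry_le1 //.
Qed.

Lemma diag_sum rho : is_diag_mx rho ->
  rho = \sum_j rho j j *: (delta_mx j j : 'M[C]_d).
Proof.
move=> /is_diag_mxP Hd; apply/matrixP => a b; rewrite summxE (bigD1 a) //=.
rewrite big1 => [|j ja]; last by rewrite !mxE eq_sym (negbTE ja) mulr0.
rewrite !mxE eqxx /= addr0; case: (eqVneq b a) => [->|ba].
  by rewrite mulr1.
by rewrite mulr0 Hd // eq_sym.
Qed.

Lemma C1 rho : is_state rho ->
  0 <= log_coh_number rho /\ (log_coh_number rho = 0 <-> incoherent rho).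
Proof.
move=> H; split; first exact: LCN_ge0.
split.
  move=> L0; apply/is_diag_mxP => a b ab; apply/eqP/negPn/negP => nz.
  have g0 : 0 < complex.Re `|rho a b|.
    by rewrite -ltr0c' -realC_ge0 ?normr_ge0 // normr_gt0.
  have := LCN_ge_state H (coherent_lb ab); rewrite L0 => /(lt_le_trans g0).
  by rewrite ltxx.
move=> Hd; apply/eqP; rewrite eq_le LCN_ge0 // andbT.
pose w j : cV := (Num.sqrt (complex.Re (rho j j)))%:C *: delta_mx j 0.
have Hr : rho = \sum_j w j *m adjmx (w j).
  rewrite {1}(diag_sum Hd); apply: eq_bigr => j _.
  rewrite -scale_outer; last by rewrite -lecR -realC_ge0 // psd_diag //; case: H.
  rewrite -realC_ge0; last by apply: psd_diag; case: H.
  by rewrite adjmx_delta mul_delta_mx.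
apply: le_trans (LCN_le (key_mem Hr _)) _; first by case: H.
apply: sumr_le0 => j _; apply: mulr_ge0_le0; first exact: nr_ge0.
apply: log2_le0; rewrite -(cards1 j); apply: subset_leq_card.
apply/fintype.subsetP => k; rewrite !inE mxE; apply: contraR => kj.
by rewrite mxE (negbTE kj) mulr0.
Qed.

End Main.
Section Kraus.
Variables (R : realType) (d : nat).
Local Notation C := R[i].
Local Notation cV := 'cV[C]_d.
Implicit Types (w v psi : cV) (c : C) (A K rho : 'M[C]_d) (x y : R).

Lemma kraus_rho K rho m (p : 'I_m -> R) (psi : 'I_m -> cV) (t : R) :
  pure_decomp rho p psi -> 0 <= t ->
  t%:C *: (K *m rho *m adjmx K) =
  \sum_i ((Num.sqrt (t * p i))%:C *: (K *m psi i)) *m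
         adjmx ((Num.sqrt (t * p i))%:C *: (K *m psi i)).
Proof.
case=> p0 _ _ -> t0; rewrite mulmx_sumr mulmx_suml scaler_sumr.
apply: eq_bigr => i _; rewrite -scale_outer ?mulr_ge0 //.
rewrite -scalemxAr -scalemxAl scalerA -rmorphM adjmx_mul !mulmxA.
by [].
Qed.

Lemma kraus_trE K rho m (p : 'I_m -> R) (psi : 'I_m -> cV) :
  pure_decomp rho p psi ->
  \tr (K *m rho *m adjmx K) = (\sum_i p i * nr (K *m psi i))%:C.
Proof.
move=> H; have := kraus_rho K H ler01; rewrite scale1r => ->.
rewrite raddf_sum rmorph_sum; apply: eq_bigr => i _ /=.
by rewrite tr_outer nrmR nr_sqrt ?mul1r //; case: H.
Qed.

Lemma kraus_probE K rho m (p : 'I_m -> R) (psi : 'I_m -> cV) :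
  pure_decomp rho p psi ->
  kraus_prob K rho = \sum_i p i * nr (K *m psi i).
Proof. by move=> H; rewrite /kraus_prob (kraus_trE K H). Qed.

Lemma kraus_nr_sum N (K : 'I_N -> 'M[C]_d) psi :
  \sum_n adjmx (K n) *m K n = 1%:M -> \sum_n nr (K n *m psi) = nr psi.
Proof.
move=> HK; apply: complexI; rewrite rmorph_sum -nrmR.
rewrite (eq_bigr (fun n => (adjmx psi *m (adjmx (K n) *m K n) *m psi) 0 0)).
  by rewrite -summxE -mulmx_suml -mulmx_sumr HK mulmx1.
by move=> n _ /=; rewrite -nrmR /nrm adjmx_mul !mulmxA.
Qed.

Lemma kraus_term_le K psi (t : R) : incoherent_kraus K -> 0 <= t ->
  nr ((Num.sqrt t)%:C *: (K *m psi)) * log_coh_rank ((Num.sqrt t)%:C *: (K *m psi))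
  <= t * nr (K *m psi) * log_coh_rank psi.
Proof.
move=> HK t0; rewrite -nr_sqrt //; apply: nr_lcr_le => _.
exact: leq_trans (coh_rankZ_le _ _) (coh_rank_kraus _ HK).
Qed.

Lemma unit_nr psi : unit_vec psi -> nr psi = 1.
Proof. by move=> u; rewrite /nr unit_nrm. Qed.

Lemma C3 N (K : 'I_N -> 'M[C]_d) rho :
  incoherent_op K -> is_state rho ->
  (\sum_(n < N | 0 < kraus_prob (K n) rho)
      kraus_prob (K n) rho *
      log_coh_number ((kraus_prob (K n) rho)^-1%:C *: (K n *m rho *m adjmx (K n))))
  <= log_coh_number rho.
Proof.
case=> Hsum Hinc Hst; apply: LCN_ge_state => // x [m [p [psi [Hd ->]]]].
have [p0 _ u _] := Hd.
pose g n := \sum_i p i * nr (K n *m psi i) * log_coh_rank (psi i).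
apply: le_trans (_ : \sum_(n < N | 0 < kraus_prob (K n) rho) g n <= _).
  apply: ler_sum => n qn.
  set q := kraus_prob (K n) rho in qn *.
  have qi0 : 0 <= q^-1 by rewrite invr_ge0 ltW.
  have Heq := kraus_rho (K n) Hd qi0.
  have tr1 : \tr (q^-1%:C *: (K n *m rho *m adjmx (K n))) = 1.
    rewrite mxtraceZ (kraus_trE _ Hd) -(kraus_probE _ Hd) -/q -rmorphM.
    by rewrite mulVf ?gt_eqF // rmorph1.
  have L1 := LCN_le (key_mem Heq tr1).
  have L2 : log_coh_number (q^-1%:C *: (K n *m rho *m adjmx (K n))) <=
      \sum_i q^-1 * p i * nr (K n *m psi i) * log_coh_rank (psi i).
    apply: le_trans L1 _; apply: ler_sum => i _.
    by rewrite kraus_term_le ?mulr_ge0.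
  apply: le_trans (ler_wpM2l (ltW qn) L2) _.
  rewrite mulr_sumr le_eqVlt; apply/orP; left; apply/eqP.
  by apply: eq_bigr => i _; rewrite !mulrA mulfV ?gt_eqF // mul1r.
apply: le_trans (_ : _ <= \sum_n g n) _.
  rewrite [X in _ <= X](bigID (fun n => 0 < kraus_prob (K n) rho)) /= lerDl.
  apply: sumr_ge0 => n _; apply: sumr_ge0 => i _.
  apply: mulr_ge0; first exact: mulr_ge0 (p0 i) (nr_ge0 _).
  exact: log2_ge0 (unit_rank (u i)).
rewrite /g /= exchange_big /= le_eqVlt; apply/orP; left; apply/eqP.
apply: eq_bigr => i _.
by rewrite -mulr_suml -mulr_sumr kraus_nr_sum // unit_nr // mulr1.
Qed.

Lemma C2 N (K : 'I_N -> 'M[C]_d) rho :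
  incoherent_op K -> is_state rho ->
  log_coh_number (apply_kraus K rho) <= log_coh_number rho.
Proof.
case=> Hsum Hinc Hst; apply: LCN_ge_state => // x [m [p [psi [Hd ->]]]].
have [p0 _ u _] := Hd.
pose w (ni : 'I_N * 'I_m) :=
  (Num.sqrt (1 * p ni.2))%:C *: (K ni.1 *m psi ni.2).
have Heq : apply_kraus K rho = \sum_ni w ni *m adjmx (w ni).
  rewrite /apply_kraus -(pair_bigA _ (fun n i => w (n, i) *m adjmx (w (n, i)))).
  apply: eq_bigr => n _ /=.
  by have := kraus_rho (K n) Hd ler01; rewrite rmorph1 scale1r.
have tr1 : \tr (apply_kraus K rho) = 1.
  rewrite /apply_kraus raddf_sum /=.
  rewrite (eq_bigr (fun n => (\sum_i p i * nr (K n *m psi i))%:C)); last first.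
    by move=> n _; rewrite (kraus_trE _ Hd).
  rewrite -rmorph_sum exchange_big /=.
  rewrite (eq_bigr (fun i => p i)); last first.
    by move=> i _; rewrite -mulr_sumr kraus_nr_sum // unit_nr // mulr1.
  by case: Hd => _ -> _ _; rewrite rmorph1.
apply: le_trans (LCN_le (key_mem Heq tr1)) _.
apply: le_trans (_ : _ <= \sum_ni 1 * p ni.2 * nr (K ni.1 *m psi ni.2) *
                               log_coh_rank (psi ni.2)) _.
  by apply: ler_sum => ni _; rewrite kraus_term_le ?mul1r.
rewrite -(pair_bigA _ (fun n i => 1 * p i * nr (K n *m psi i) * log_coh_rank (psi i))).
rewrite exchange_big /= le_eqVlt; apply/orP; left; apply/eqP.
apply: eq_bigr => i _.
by rewrite -mulr_suml -mulr_sumr kraus_nr_sum // unit_nr // !mul1r mulr1.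
Qed.

End Kraus.
Section Conv.
Variables (R : realType) (d : nat).
Local Notation C := R[i].
Local Notation cV := 'cV[C]_d.
Implicit Types (w v psi : cV) (c : C) (A K rho : 'M[C]_d) (x y : R).

Lemma sum_map_enum (V : nmodType) (T : Type) n (f : 'I_n -> T) (G : T -> V) :
  \sum_(w <- [seq f k | k <- enum 'I_n]) G w = \sum_(k < n) G (f k).
Proof. by rewrite big_map big_enum. Qed.

Lemma sum_flatten (V : nmodType) (T : Type) n (s : 'I_n -> seq T) (G : T -> V) :
  \sum_(w <- flatten [seq s j | j <- enum 'I_n]) G w =
  \sum_(j < n) \sum_(w <- s j) G w.
Proof. by rewrite big_flatten /= big_map big_enum. Qed.

Definition Dec := {k : nat & (('I_k -> R) * ('I_k -> cV))%type}.

Lemma C4 m (p : 'I_m -> R) (rhos : 'I_m -> 'M[C]_d) :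
  (forall j, 0 <= p j) -> \sum_(j < m) p j = 1 ->
  (forall j, is_state (rhos j)) ->
  log_coh_number (\sum_(j < m) (p j)%:C *: rhos j)
    <= \sum_(j < m) p j * log_coh_number (rhos j).
Proof.
move=> p0 p1 Hst; apply/ler_addgt0Pr => e e0.
have ex : forall j, exists D : Dec,
    pure_decomp (rhos j) (projT2 D).1 (projT2 D).2 /\
    \sum_(k < projT1 D) (projT2 D).1 k * log_coh_rank ((projT2 D).2 k)
      < log_coh_number (rhos j) + e.
  move=> j; have ne := state_ne (Hst j).
  have hl : log_coh_number (rhos j) < log_coh_number (rhos j) + e by rewrite ltrDl.
  have [y [k [q [ph [Hd ->]]]] ylt] := inf_lt ne hl.
  by exists (existT _ k (q, ph)).
have [D HD] := choice ex.
pose M j := projT1 (D j).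
pose q j : 'I_(M j) -> R := (projT2 (D j)).1.
pose ph j : 'I_(M j) -> cV := (projT2 (D j)).2.
pose wv j k := (Num.sqrt (p j * q j k))%:C *: ph j k.
pose S := flatten [seq [seq wv j k | k <- enum 'I_(M j)] | j <- enum 'I_m].
have Heq : \sum_(j < m) (p j)%:C *: rhos j = \sum_(w <- S) w *m adjmx w.
  rewrite sum_flatten; apply: eq_bigr => j _; rewrite sum_map_enum.
  case: (HD j) => [[q0 _ _ Er] _]; rewrite [in LHS]Er scaler_sumr.
  apply: eq_bigr => k _; rewrite scalerA -rmorphM; apply: scale_outer.
  by rewrite mulr_ge0.
have tr1 : \tr (\sum_(j < m) (p j)%:C *: rhos j) = 1.
  rewrite raddf_sum /= (eq_bigr (fun j => (p j)%:C)); last first.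
    by move=> j _; rewrite mxtraceZ; case: (Hst j) => _ ->; rewrite mulr1.
  by rewrite -rmorph_sum p1 rmorph1.
apply: le_trans (LCN_le (key_mem_seq Heq tr1)) _.
rewrite sum_flatten.
apply: le_trans (_ : _ <= \sum_(j < m) p j *
   \sum_(k < M j) q j k * log_coh_rank (ph j k)) _.
  apply: ler_sum => j _; rewrite sum_map_enum mulr_sumr; apply: ler_sum => k _.
  case: (HD j) => [[q0 _ u _] _].
  have t0 : 0 <= p j * q j k by exact: mulr_ge0 (p0 j) (q0 k).
  apply: le_trans (nr_lcr_le (v := ph j k) _) _.
    by move=> _; apply: coh_rankZ_le.
  by rewrite /wv nr_sqrt // (unit_nr (u k)) mulr1 mulrA.
apply: le_trans (_ : _ <= \sum_(j < m) p j * (log_coh_number (rhos j) + e)) _.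
  apply: ler_sum => j _; apply: ler_wpM2l => //.
  by case: (HD j) => _ /ltW.
rewrite (eq_bigr (fun j => p j * log_coh_number (rhos j) + p j * e)); last first.
  by move=> j _; rewrite mulrDr.
by rewrite big_split /= -mulr_suml p1 mul1r.
Qed.

End Conv.

Unset Implicit Arguments.
Theorem proposition2 (R : realType) (d : nat) :
  (* (C1) nonnegativity and faithfulness *)
  (forall rho : 'M[R[i]]_d, is_state rho ->
     0 <= log_coh_number rho /\
     (log_coh_number rho = 0 <-> incoherent rho)) /\
  (* (C2) monotonicity under incoherent operations *)
  (forall (N : nat) (K : 'I_N -> 'M[R[i]]_d) (rho : 'M[R[i]]_d),
     incoherent_op K -> is_state rho ->
     log_coh_number (apply_kraus K rho) <= log_coh_number rho) /\
  (* (C3) strong monotonicity under selective incoherent operations *)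
  (forall (N : nat) (K : 'I_N -> 'M[R[i]]_d) (rho : 'M[R[i]]_d),
     incoherent_op K -> is_state rho ->
     (\sum_(n < N | 0 < kraus_prob (K n) rho)
        kraus_prob (K n) rho *
        log_coh_number ((kraus_prob (K n) rho)^-1%:C *: (K n *m rho *m adjmx (K n))))
     <= log_coh_number rho) /\
  (* (C4) convexity *)
  (forall (m : nat) (p : 'I_m -> R) (rhos : 'I_m -> 'M[R[i]]_d),
     (forall j, 0 <= p j) -> \sum_(j < m) p j = 1 ->
     (forall j, is_state (rhos j)) ->
     log_coh_number (\sum_(j < m) (p j)%:C *: rhos j)
       <= \sum_(j < m) p j * log_coh_number (rhos j)).
Proof.
split; first by move=> rho H; exact: C1 H.
split; first by move=> N K rho HK H; exact: C2 HK H.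
split; first by move=> N K rho HK H; exact: C3 HK H.
by move=> m p rhos p0 p1 H; exact: C4 p0 p1 H.
Qed.
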